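(* Every finitely generated group with infinitely many ends is not presentable by a product.
   Context: An infinite group $\Gamma$ is not presentable by a product if for every homomorphism $\varphi\colon \Gamma_1\times\Gamma_2\to\Gamma$ whose image has finite index in $\Gamma$, at least one of $\varphi(\Gamma_1)$, $\varphi(\Gamma_2)$ is finite. The ends of a finitely generated group are the ends of a Cayley graph with respect to a finite generating set. *)

(* Defs.v *)
From Stdlib Require Import List Relations.
Import ListNotations.
Set Implicit Arguments.

Record is_group (T : Type) (mul : T -> T -> T) (one : T) (inv : T -> T) : Prop := {
  grp_assoc : forall x y z, mul x (mul y z) = mul (mul x y) z;
  grp_idl : forall x, mul one x = x;
  grp_idr : forall x, mul x one = x;
  grp_invl : forall x, mul (inv x) x = one;
  grp_invr : forall x, mul x (inv x) = one
}.

Definition finite_set (T : Type) (P : T -> Prop) : Prop :=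
  exists l : list T, forall x, P x -> In x l.

Definition is_hom (A B : Type) (mulA : A -> A -> A) (mulB : B -> B -> B)
  (f : A -> B) : Prop := forall x y, f (mulA x y) = mulB (f x) (f y).

Definition image_set (A B : Type) (f : A -> B) : B -> Prop :=
  fun b => exists a, f a = b.

Definition finite_index (T : Type) (mul : T -> T -> T) (H : T -> Prop) : Prop :=
  exists l : list T, forall g, exists c h, In c l /\ H h /\ g = mul c h.

Definition prod_mul (A B : Type) (mulA : A -> A -> A) (mulB : B -> B -> B)
  (x y : A * B) : A * B := (mulA (fst x) (fst y), mulB (snd x) (snd y)).

Definition not_presentable_by_product (T : Type) (mul : T -> T -> T) (one : T)
  (inv : T -> T) : Prop :=
  ~ finite_set (fun _ : T => True) /\
  forall (G1 : Type) (mul1 : G1 -> G1 -> G1) (one1 : G1) (inv1 : G1 -> G1)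
         (G2 : Type) (mul2 : G2 -> G2 -> G2) (one2 : G2) (inv2 : G2 -> G2)
         (phi : G1 * G2 -> T),
    is_group mul1 one1 inv1 -> is_group mul2 one2 inv2 ->
    is_hom (prod_mul mul1 mul2) mul phi ->
    finite_index mul (image_set phi) ->
    finite_set (image_set (fun a : G1 => phi (a, one2))) \/
    finite_set (image_set (fun b : G2 => phi (one1, b))).

Inductive generated (T : Type) (mul : T -> T -> T) (one : T) (inv : T -> T)
  (S : list T) : T -> Prop :=
| gen_one : generated mul one inv S one
| gen_mul : forall g s, generated mul one inv S g -> In s S ->
    generated mul one inv S (mul g s)
| gen_mulinv : forall g s, generated mul one inv S g -> In s S ->
    generated mul one inv S (mul g (inv s)).

Definition generating_list (T : Type) (mul : T -> T -> T) (one : T)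
  (inv : T -> T) (S : list T) : Prop :=
  forall g, generated mul one inv S g.

Definition cayley_edge (T : Type) (mul : T -> T -> T) (inv : T -> T)
  (S : list T) (x y : T) : Prop :=
  exists s, In s S /\ (y = mul x s \/ y = mul x (inv s)).

Definition conn_avoiding (V : Type) (E : V -> V -> Prop) (K : list V) : V -> V -> Prop :=
  clos_refl_trans V (fun x y => E x y /\ ~ In x K /\ ~ In y K).

Definition infinitely_many_ends (V : Type) (E : V -> V -> Prop) : Prop :=
  forall n : nat, exists (K : list V) (l : list V),
    length l = n /\
    (forall x, In x l -> ~ In x K /\ ~ finite_set (conn_avoiding E K x)) /\
    NoDup l /\
    (forall x y, In x l -> In y l -> conn_avoiding E K x y -> x = y).

(* Main.v *)
Require Import Defs.
From Stdlib Require Import List Relations Lia Classical Arith PeanoNat.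
Import ListNotations.

Lemma fin_sub (T : Type) (P Q : T -> Prop) :
  finite_set Q -> (forall x, P x -> Q x) -> finite_set P.
Proof. intros [l Hl] H. exists l. auto. Qed.

Lemma fin_or (T : Type) (P Q : T -> Prop) :
  finite_set P -> finite_set Q -> finite_set (fun x => P x \/ Q x).
Proof. intros [l1 H1] [l2 H2]. exists (l1 ++ l2). intros x [h|h]; apply in_or_app; auto. Qed.

Lemma fin_list (T : Type) (l : list T) : finite_set (fun x => In x l).
Proof. exists l. auto. Qed.

Lemma fin_img (A B : Type) (P : A -> Prop) (f : A -> B) :
  finite_set P -> finite_set (fun z => exists x, P x /\ z = f x).
Proof. intros [l Hl]. exists (map f l). intros z [x [Px ->]]. apply in_map. auto. Qed.

Lemma fin_union (A T : Type) (L : list A) (Q : A -> T -> Prop) :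
  (forall u, In u L -> finite_set (Q u)) -> finite_set (fun z => exists u, In u L /\ Q u z).
Proof.
  induction L as [|u L IH]; intros H.
  - exists []. intros z [u [[] _]].
  - destruct (H u (or_introl eq_refl)) as [l1 H1].
    destruct IH as [l2 H2]. { intros v Hv. apply H. right. auto. }
    exists (l1 ++ l2). intros z [v [[<-|Hv] Q']]; apply in_or_app; [left; auto | right].
    apply H2. eauto.
Qed.

Lemma fin_empty (T : Type) (P : T -> Prop) : (forall x, ~ P x) -> finite_set P.
Proof. intros H. exists []. intros x Px. exfalso. eapply H; eauto. Qed.

Lemma infinite_avoid (T : Type) (P : T -> Prop) (l : list T) :
  ~ finite_set P -> exists x, P x /\ ~ In x l.
Proof.
  intros H. apply NNPP. intros H'. apply H. exists l. intros x Px.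
  apply NNPP. intros Hn. apply H'. eauto.
Qed.

Lemma min_exists (P : nat -> Prop) : (exists n, P n) -> exists n, P n /\ forall m, P m -> n <= m.
Proof.
  intros [n Hn]. revert Hn. induction n as [n IH] using (well_founded_induction Wf_nat.lt_wf).
  intros Hn. destruct (classic (exists m, P m /\ m < n)) as [[m [Hm Hlt]]|Hno].
  - exact (IH m Hlt Hm).
  - exists n. split; auto. intros m Hm. destruct (Compare_dec.le_lt_dec n m); auto.
    exfalso. eauto.
Qed.

Section G.
Variable T : Type.
Variables (mul : T -> T -> T) (one : T) (inv : T -> T).
Hypothesis Hg : is_group mul one inv.
Variable gens : list T.
Hypothesis HS : generating_list mul one inv gens.

Local Infix "**" := mul (at level 40, left associativity).

Lemma assoc x y z : x ** (y ** z) = x ** y ** z. Proof. apply (grp_assoc Hg). Qed.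
Lemma idl x : one ** x = x. Proof. apply (grp_idl Hg). Qed.
Lemma idr x : x ** one = x. Proof. apply (grp_idr Hg). Qed.
Lemma invl x : inv x ** x = one. Proof. apply (grp_invl Hg). Qed.
Lemma invr x : x ** inv x = one. Proof. apply (grp_invr Hg). Qed.

Lemma cancel_l g x y : g ** x = g ** y -> x = y.
Proof. intros H. rewrite <- (idl x), <- (idl y), <- (invl g), <- !assoc, H. auto. Qed.

Lemma inv_unique x y : x ** y = one -> y = inv x.
Proof. intros H. apply (cancel_l x). rewrite H, invr. auto. Qed.

Lemma inv_inv x : inv (inv x) = x.
Proof. symmetry. apply inv_unique. apply invl. Qed.

Lemma inv_mul x y : inv (x ** y) = inv y ** inv x.
Proof. symmetry. apply inv_unique. rewrite <- assoc, (assoc y), invr, idl, invr. auto. Qed.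

Lemma inv_one : inv one = one.
Proof. symmetry. apply inv_unique. apply idl. Qed.

Lemma mul_inv_l g x : inv g ** (g ** x) = x.
Proof. rewrite assoc, invl, idl. auto. Qed.
Lemma mul_inv_r g x : g ** (inv g ** x) = x.
Proof. rewrite assoc, invr, idl. auto. Qed.

Inductive reach : nat -> T -> Prop :=
| r0 : reach 0 one
| rs : forall n g s, reach n g -> In s gens -> reach (S n) (g ** s)
| rsi : forall n g s, reach n g -> In s gens -> reach (S n) (g ** inv s).

Lemma reach_mul m y : reach m y -> forall n x, reach n x -> reach (n + m) (x ** y).
Proof.
  induction 1; intros k x Hx.
  - rewrite idr, Nat.add_0_r. auto.
  - rewrite Nat.add_succ_r, assoc. constructor; auto.
  - rewrite Nat.add_succ_r, assoc. apply rsi; auto.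
Qed.

Lemma reach_gen s : In s gens -> reach 1 s.
Proof. intros H. rewrite <- (idl s). constructor; auto. constructor. Qed.
Lemma reach_geni s : In s gens -> reach 1 (inv s).
Proof. intros H. rewrite <- (idl (inv s)). apply rsi; auto. constructor. Qed.

Lemma reach_inv n x : reach n x -> reach n (inv x).
Proof.
  induction 1.
  - rewrite inv_one. constructor.
  - rewrite inv_mul. change (S n) with (1 + n). apply reach_mul; auto. apply reach_geni; auto.
  - rewrite inv_mul, inv_inv. change (S n) with (1 + n). apply reach_mul; auto. apply reach_gen; auto.
Qed.

Lemma reach_ex x : exists n, reach n x.
Proof.
  induction (HS x) as [|g s _ [n IH] Hs|g s _ [n IH] Hs].
  - exists 0. constructor.
  - exists (S n). constructor; auto.
  - exists (S n). apply rsi; auto.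
Qed.

Lemma len_ex x : exists n, reach n x /\ forall m, reach m x -> n <= m.
Proof. apply min_exists. apply reach_ex. Qed.

Lemma ball_fin R : finite_set (fun x => exists m, m <= R /\ reach m x).
Proof.
  induction R.
  - exists [one]. intros x [m [Hm Hr]]. assert (m = 0) by lia. subst. inversion Hr. left; auto.
  - apply fin_sub with (fun x => (exists m, m <= R /\ reach m x) \/
        ((exists s, In s gens /\ exists g, (exists m, m <= R /\ reach m g) /\ x = g ** s) \/
         (exists s, In s gens /\ exists g, (exists m, m <= R /\ reach m g) /\ x = g ** inv s))).
    + apply fin_or; auto. apply fin_or; apply fin_union; intros; apply fin_img; auto.
    + intros x [m [Hm Hr]]. destruct (Nat.eq_dec m (S R)).
      * subst. inversion Hr; subst; right; [left|right]; eauto 8.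
      * left. exists m. split; auto. lia.
Qed.

Definition E := cayley_edge mul inv gens.
Definition connK (K : list T) := conn_avoiding E K.

Lemma E_sym x y : E x y -> E y x.
Proof.
  intros [s [Hs [->| ->]]]; exists s; split; auto.
  - right. rewrite <- assoc, invr, idr. auto.
  - left. rewrite <- assoc, invl, idr. auto.
Qed.

Lemma E_trans_l g x y : E x y -> E (g ** x) (g ** y).
Proof. intros [s [Hs [->| ->]]]; exists s; split; auto; rewrite assoc; auto. Qed.

Lemma conn_sym K x y : connK K x y -> connK K y x.
Proof.
  induction 1.
  - apply rt_step. destruct H as [H [H1 H2]]. split; auto. apply E_sym; auto.
  - apply rt_refl.
  - eapply rt_trans; eauto.
Qed.

Lemma conn_trans K x y z : connK K x y -> connK K y z -> connK K x z.
Proof. apply rt_trans. Qed.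

Lemma conn_edge K x y : E x y -> ~ In x K -> ~ In y K -> connK K x y.
Proof. intros. apply rt_step. auto. Qed.

Lemma conn_mono (K1 K2 : list T) x y :
  (forall z, In z K2 -> In z K1) -> connK K1 x y -> connK K2 x y.
Proof.
  intros HK. induction 1.
  - destruct H as [H [H1 H2]]. apply rt_step. split; auto.
  - apply rt_refl.
  - eapply rt_trans; eauto.
Qed.

Lemma in_map_mul g (K : list T) x : In (g ** x) (map (mul g) K) <-> In x K.
Proof.
  split.
  - intros H. apply in_map_iff in H. destruct H as [y [Hy Hin]].
    apply cancel_l in Hy. subst. auto.
  - intros H. apply in_map. auto.
Qed.

Lemma conn_transl g K x y : connK K x y -> connK (map (mul g) K) (g ** x) (g ** y).
Proof.
  induction 1.
  - destruct H as [H [H1 H2]]. apply rt_step. split; [apply E_trans_l; auto|].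
    rewrite !in_map_mul. auto.
  - apply rt_refl.
  - eapply rt_trans; eauto.
Qed.

Lemma conn_notin K x y : connK K x y -> ~ In x K -> ~ In y K.
Proof.
  intros H. apply clos_rt_rtn1 in H. induction H; auto.
  intros _. destruct H as [_ [_ H]]. auto.
Qed.


Lemma path_of n b : reach n b -> exists l, In one l /\ In b l /\
  (forall x, In x l -> exists k, k <= n /\ reach k x /\ reach (n - k) (inv x ** b)) /\
  (forall a K, (forall x, In x l -> ~ In (a ** x) K) -> forall x, In x l -> connK K a (a ** x)).
Proof.
  induction 1 as [|n g s Hr IH Hs|n g s Hr IH Hs].
  - exists [one]. repeat split; try (left; auto).
    + intros x [<-|[]]. exists 0. rewrite invl. split; [lia|]. split; constructor.
    + intros a K _ x [<-|[]]. rewrite idr. apply rt_refl.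
  - destruct IH as [l [H1 [H2 [H3 H4]]]].
    exists (g ** s :: l). repeat split.
    + right; auto.
    + left; auto.
    + intros x [<-|Hx].
      * exists (S n). rewrite invl, Nat.sub_diag. repeat split; auto. constructor; auto. constructor.
      * destruct (H3 x Hx) as [k [Hk [Hk1 Hk2]]]. exists k. repeat split; auto.
        replace (S n - k) with (S (n - k)) by lia. rewrite assoc. constructor; auto.
    + intros a K HK x [<-|Hx].
      * apply conn_trans with (a ** g).
        -- apply H4; auto. intros y Hy. apply HK. right; auto.
        -- apply conn_edge.
           ++ exists s. split; auto. left. rewrite assoc. auto.
           ++ apply HK. right; auto.
           ++ apply HK. left; auto.
      * apply H4; auto. intros y Hy. apply HK. right; auto.
  - destruct IH as [l [H1 [H2 [H3 H4]]]].
    exists (g ** inv s :: l). repeat split.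
    + right; auto.
    + left; auto.
    + intros x [<-|Hx].
      * exists (S n). rewrite invl, Nat.sub_diag. repeat split; auto. apply rsi; auto. constructor.
      * destruct (H3 x Hx) as [k [Hk [Hk1 Hk2]]]. exists k. repeat split; auto.
        replace (S n - k) with (S (n - k)) by lia. rewrite assoc. apply rsi; auto.
    + intros a K HK x [<-|Hx].
      * apply conn_trans with (a ** g).
        -- apply H4; auto. intros y Hy. apply HK. right; auto.
        -- apply conn_edge.
           ++ exists s. split; auto. right. rewrite assoc. auto.
           ++ apply HK. right; auto.
           ++ apply HK. left; auto.
      * apply H4; auto. intros y Hy. apply HK. right; auto.
Qed.

Lemma exc_fin K u : finite_set (fun v => ~ connK K v (v ** u)).
Proof.
  destruct (reach_ex u) as [n Hn]. destruct (path_of _ _ Hn) as [l [_ [Hb [_ H4]]]].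
  apply fin_sub with (fun v => exists k, In k K /\ exists p, In p l /\ v = k ** inv p).
  - apply fin_union. intros k _. apply fin_img. apply fin_list.
  - intros v Hv. apply NNPP. intros Hn'. apply Hv. apply H4; auto.
    intros x Hx Hin. apply Hn'. exists (v ** x). split; auto. exists x. split; auto.
    rewrite <- assoc, invr, idr. auto.
Qed.

Lemma conn_any x y : connK [] x y.
Proof.
  destruct (reach_ex (inv x ** y)) as [n Hn]. destruct (path_of _ _ Hn) as [l [_ [Hb [_ H4]]]].
  replace y with (x ** (inv x ** y)) by apply mul_inv_r.
  apply H4; auto.
Qed.

Lemma not_all_in (l : list T) (P : T -> Prop) : ~ (forall x, In x l -> ~ P x) -> exists x, In x l /\ P x.
Proof. intros H. apply NNPP. intros H'. apply H. intros x Hx Px. apply H'. eauto. Qed.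

Lemma two_r K r a b : a ** b = b ** a -> (forall k, In k K -> exists m, m <= r /\ reach m k) ->
  connK K a (a ** b) \/ connK K b (b ** a) \/ exists m, m <= r + r /\ reach m (a ** b).
Proof.
  intros Hc HK.
  destruct (len_ex a) as [na [Ha Hamin]]. destruct (len_ex b) as [nb [Hb Hbmin]].
  destruct (path_of _ _ Ha) as [la [_ [Hal [Ha3 Ha4]]]].
  destruct (path_of _ _ Hb) as [lb [_ [Hbl [Hb3 Hb4]]]].
  destruct (classic (forall x, In x lb -> ~ In (a ** x) K)) as [H1|H1].
  { left. apply Hb4; auto. }
  destruct (classic (forall x, In x la -> ~ In (b ** x) K)) as [H2|H2].
  { right; left. apply Ha4; auto. }
  right; right.
  apply not_all_in in H1. destruct H1 as [x [Hx HxK]].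
  apply not_all_in in H2. destruct H2 as [y [Hy HyK]].
  destruct (Hb3 x Hx) as [k [Hk [Hk1 Hk2]]].
  destruct (Ha3 y Hy) as [j [Hj [Hj1 Hj2]]].
  destruct (HK _ HxK) as [m1 [Hm1 Hr1]].
  destruct (HK _ HyK) as [m2 [Hm2 Hr2]].
  assert (Hna : na <= m1 + k).
  { apply Hamin. replace a with ((a ** x) ** inv x) by (rewrite <- assoc, invr, idr; auto).
    apply reach_mul; auto. apply reach_inv; auto. }
  assert (Hnb : nb <= m2 + j).
  { apply Hbmin. replace b with ((b ** y) ** inv y) by (rewrite <- assoc, invr, idr; auto).
    apply reach_mul; auto. apply reach_inv; auto. }
  assert (R1 : reach (m1 + (nb - k)) (a ** b)).
  { replace (a ** b) with ((a ** x) ** (inv x ** b)) by (rewrite <- assoc, mul_inv_r; auto).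
    apply reach_mul; auto. }
  assert (R2 : reach (m2 + (na - j)) (a ** b)).
  { rewrite Hc. replace (b ** a) with ((b ** y) ** (inv y ** a)) by (rewrite <- assoc, mul_inv_r; auto).
    apply reach_mul; auto. }
  destruct (Compare_dec.le_lt_dec (m1 + (nb - k)) (r + r)).
  - eauto.
  - exists (m2 + (na - j)). split; auto. lia.
Qed.

Definition Kconnected (K' : list T) :=
  forall Y, (forall w, In w K' -> ~ In w Y) -> forall z, In z K' -> connK Y one z.

Lemma Kconn (K : list T) : exists K', (forall z, In z K -> In z K') /\ In one K' /\ Kconnected K'.
Proof.
  induction K as [|k K IH].
  - exists [one]. split; [intros z []|]. split; [left; auto|].
    intros Y _ z [<-|[]]. apply rt_refl.
  - destruct IH as [K0 [H1 [H2 H3]]].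
    destruct (reach_ex k) as [n Hn]. destruct (path_of _ _ Hn) as [l [_ [Hk [_ H4]]]].
    exists (l ++ K0). split; [|split].
    + intros z [<-|Hz]; apply in_or_app; auto.
    + apply in_or_app; auto.
    + intros Y HY z Hz. apply in_app_or in Hz. destruct Hz as [Hz|Hz].
      * rewrite <- (idl z). apply H4; auto. intros x Hx. rewrite idl. apply HY. apply in_or_app; auto.
      * apply H3; auto. intros w Hw. apply HY. apply in_or_app; auto.
Qed.

Lemma refine K K' x : (forall z, In z K -> In z K') -> ~ In x K -> ~ finite_set (connK K x) ->
  exists x', connK K x x' /\ ~ In x' K' /\ ~ finite_set (connK K' x').
Proof.
  intros HKK Hx Hinf. apply NNPP. intros Hno. apply Hinf.
  set (W := x :: flat_map (fun k => map (mul k) gens ++ map (fun s => k ** inv s) gens) K').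
  assert (Claim : forall z, connK K x z -> In z K' \/ exists w, In w W /\
            (connK K x w /\ ~ In w K' /\ connK K' w z)).
  { intros z Hz. apply clos_rt_rtn1 in Hz. induction Hz as [|y z Hyz Hxy IH].
    - destruct (classic (In x K')) as [h|h]; [left; auto|]. right. exists x.
      split; [left; auto|]. repeat split; auto; apply rt_refl.
    - destruct (classic (In z K')) as [h|h]; [left; auto|]. right.
      destruct Hyz as [Hyz [HyK HzK]].
      assert (Hxz : connK K x z).
      { apply conn_trans with y. apply clos_rt_rtn1_iff. auto. apply conn_edge; auto. }
      destruct IH as [IH|[w [Hw [Hw1 [Hw2 Hw3]]]]].
      + exists z. split.
        * right. apply in_flat_map. exists y. split; auto. apply in_or_app.
          destruct Hyz as [s [Hs [->| ->]]]; [left|right]; apply in_map_iff; eauto.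
        * repeat split; auto. apply rt_refl.
      + exists w. repeat split; auto. apply conn_trans with y; auto.
        apply conn_edge; auto. intros h'. apply (conn_notin _ _ _ Hw3); auto. }
  apply fin_sub with (fun z => In z K' \/ exists w, In w W /\
            (connK K x w /\ ~ In w K' /\ connK K' w z)).
  - apply fin_or; [apply fin_list|]. apply fin_union. intros w _.
    destruct (classic (connK K x w /\ ~ In w K')) as [[h1 h2]|h].
    + apply fin_sub with (connK K' w).
      * apply NNPP. intros hn. apply Hno. eauto.
      * intros z [_ [_ hz]]. auto.
    + apply fin_empty. intros z [h1 [h2 _]]. auto.
  - auto.
Qed.

Lemma hit_one (K' Y : list T) a : In one K' -> Kconnected K' -> (forall w, In w K' -> ~ In w Y) ->
  ~ In a K' -> (forall z, connK K' a z -> ~ In z Y) -> connK Y a one.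
Proof.
  intros H1 Hc HY Ha Hcomp.
  assert (Hp := conn_any a one). unfold connK, conn_avoiding in Hp.
  apply clos_rt_rt1n in Hp.
  assert (G : forall u v, clos_refl_trans_1n T (fun x y => E x y /\ ~ In x [] /\ ~ In y []) u v ->
            v = one -> connK K' a u -> connK Y u one).
  { intros u v H. induction H as [u|u u1 v [Hu [_ _]] Hr IH]; intros -> Hau.
    - exfalso. apply (conn_notin _ _ _ Hau); auto.
    - assert (HuK : ~ In u K') by (apply (conn_notin _ _ _ Hau); auto).
      assert (HuY : ~ In u Y) by auto.
      destruct (classic (In u1 K')) as [h|h].
      + apply conn_trans with u1.
        * apply conn_edge; auto.
        * apply conn_sym. apply Hc; auto.
      + assert (Hau1 : connK K' a u1) by (apply conn_trans with u; auto; apply conn_edge; auto).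
        apply conn_trans with u1; auto.
        apply conn_edge; auto. }
  eapply G; eauto. apply rt_refl.
Qed.

Lemma lift_conn (K' Y : list T) a z : (forall w, connK K' a w -> ~ In w Y) ->
  connK K' a z -> connK Y a z.
Proof.
  intros Hcomp H. apply clos_rt_rtn1 in H. induction H as [|y z [Hyz [Hy1 Hz1]] Hr IH].
  - apply rt_refl.
  - assert (Hay : connK K' a y) by (apply clos_rt_rtn1_iff; auto).
    apply conn_trans with y; auto. apply conn_edge; auto.
    apply Hcomp. apply conn_trans with y; auto. apply rt_step. auto.
Qed.

Lemma core K' g a1 a2 : In one K' -> Kconnected K' ->
  (forall k, In k K' -> ~ In k (map (mul g) K')) ->
  ~ In a1 K' -> ~ In a2 K' ->
  (forall z, connK K' a1 z -> ~ In z (map (mul g) K')) ->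
  (forall z, connK K' a2 z -> ~ In z (map (mul g) K')) ->
  connK K' a1 (g ** a1) -> connK K' a2 (g ** a2) -> connK K' a1 a2.
Proof.
  intros H1 Hc Hd Ha1 Ha2 Hc1 Hc2 Hg1 Hg2.
  set (Y := map (mul g) K') in *.
  assert (C1 := hit_one _ _ _ H1 Hc Hd Ha1 Hc1).
  assert (C2 := hit_one _ _ _ H1 Hc Hd Ha2 Hc2).
  assert (D1 := lift_conn _ _ _ _ Hc1 Hg1).
  assert (D2 := lift_conn _ _ _ _ Hc2 Hg2).
  assert (F : connK Y (g ** a1) (g ** a2)).
  { apply conn_trans with a1. apply conn_sym; auto.
    apply conn_trans with one; auto. apply conn_trans with a2; auto. apply conn_sym; auto. }
  apply (conn_transl (inv g)) in F. rewrite !mul_inv_l in F.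
  eapply conn_mono; [|exact F].
  intros z Hz. rewrite <- (mul_inv_l g z). apply in_map_mul. unfold Y. apply in_map_mul. auto.
Qed.

Lemma radius (K : list T) : exists r, forall k, In k K -> exists m, m <= r /\ reach m k.
Proof.
  induction K as [|k K [r IH]].
  - exists 0. intros k [].
  - destruct (reach_ex k) as [n Hn]. exists (n + r). intros z [<-|Hz].
    + exists n. split; auto. lia.
    + destruct (IH z Hz) as [m [Hm Hr]]. exists m. split; auto. lia.
Qed.

Lemma star (PA PB Himg : T -> Prop) (L K' : list T) y :
  (forall a b, PA a -> PB b -> a ** b = b ** a) ->
  (forall h, Himg h -> exists a b, PA a /\ PB b /\ h = a ** b) ->
  (forall x, exists h c, In c L /\ Himg h /\ x = h ** c) ->
  ~ In y K' -> ~ finite_set (connK K' y) ->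
  ~ finite_set (fun a => PA a /\ connK K' y a) \/ ~ finite_set (fun b => PB b /\ connK K' y b).
Proof.
  intros Hcomm Hdec Hcov Hy Hinf.
  apply NNPP. intros Hn. apply not_or_and in Hn. destruct Hn as [HA HB].
  apply NNPP in HA. apply NNPP in HB. destruct HA as [LA HLA]. destruct HB as [LB HLB].
  destruct (radius K') as [r Hr].
  assert (Hgood : finite_set (fun h => Himg h /\ connK K' y h)).
  { apply fin_sub with (fun h => (exists m, m <= r + r /\ reach m h) \/
       ((exists a, In a LA /\ exists b, (In b LB \/ ~ connK K' b (b ** a)) /\ h = a ** b) \/
        (exists b, In b LB /\ exists a, (In a LA \/ ~ connK K' a (a ** b)) /\ h = a ** b))).
    - apply fin_or; [apply ball_fin|]. apply fin_or.
      + apply fin_union. intros a _.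
        apply (fin_img _ _ (fun b => In b LB \/ ~ connK K' b (b ** a)) (mul a)).
        apply fin_or; [apply fin_list|apply exc_fin].
      + apply fin_union. intros b _.
        apply (fin_img _ _ (fun a => In a LA \/ ~ connK K' a (a ** b)) (fun a => a ** b)).
        apply fin_or; [apply fin_list|apply exc_fin].
    - intros h [Hh Hyh]. destruct (Hdec h Hh) as [a [b [Ha [Hb ->]]]].
      assert (Hc := Hcomm a b Ha Hb).
      destruct (two_r K' r a b Hc Hr) as [H1|[H2|H3]]; [right; left|right; right|left; auto].
      + exists a. split.
        * apply HLA. split; auto. apply conn_trans with (a ** b); auto. apply conn_sym; auto.
        * exists b. split; auto. destruct (classic (connK K' b (b ** a))) as [h|h]; auto.
          left. apply HLB. split; auto. apply conn_trans with (a ** b); auto.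
          rewrite Hc. apply conn_sym; auto.
      + exists b. split.
        * apply HLB. split; auto. apply conn_trans with (a ** b); auto. rewrite Hc. apply conn_sym; auto.
        * exists a. split; auto. destruct (classic (connK K' a (a ** b))) as [h|h]; auto.
          left. apply HLA. split; auto. apply conn_trans with (a ** b); auto.
          apply conn_sym; auto. }
  apply Hinf.
  apply fin_sub with (fun x => exists c, In c L /\ exists h,
     ((Himg h /\ connK K' y h) \/ ~ connK K' h (h ** c)) /\ x = h ** c).
  - apply fin_union. intros c _.
    apply (fin_img _ _ (fun h => (Himg h /\ connK K' y h) \/ ~ connK K' h (h ** c)) (fun h => h ** c)).
    apply fin_or; [exact Hgood|apply exc_fin].
  - intros x Hx. destruct (Hcov x) as [h [c [Hc [Hh ->]]]]. exists c. split; auto.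
    exists h. split; auto. destruct (classic (connK K' h (h ** c))) as [k|k]; auto.
    left. split; auto. apply conn_trans with (h ** c); auto. apply conn_sym; auto.
Qed.

Lemma bK_conn K' b k : Kconnected K' -> (forall k, In k K' -> ~ In k (map (mul b) K')) ->
  In k K' -> connK K' (b ** k) b.
Proof.
  intros Hc Hfar Hk.
  assert (H : connK (map (mul (inv b)) K') one k).
  { apply Hc; auto. intros w Hw Hin. apply in_map_iff in Hin. destruct Hin as [k'' [Hk'' Hin]].
    apply (Hfar k''); auto. rewrite <- (mul_inv_r b k''), Hk''. apply in_map. auto. }
  apply (conn_transl b) in H. rewrite idr in H. apply conn_sym.
  eapply conn_mono; [|exact H]. intros z Hz. rewrite <- (mul_inv_r b z).
  apply in_map_mul. apply in_map_mul. auto.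
Qed.

Lemma side (PA PB : T -> Prop) K' b y1 y2 :
  (forall a b, PA a -> PB b -> a ** b = b ** a) ->
  In one K' -> Kconnected K' -> PB b ->
  (forall k, In k K' -> ~ In k (map (mul b) K')) ->
  ~ In y1 K' -> ~ In y2 K' -> ~ connK K' y1 y2 ->
  ~ finite_set (fun a => PA a /\ connK K' y1 a) ->
  ~ finite_set (fun a => PA a /\ connK K' y2 a) ->
  connK K' y1 b \/ connK K' y2 b.
Proof.
  intros Hcomm H1 Hc Hb Hfar Hy1 Hy2 Hn I1 I2.
  destruct (exc_fin K' b) as [lx Hlx].
  destruct (infinite_avoid _ _ lx I1) as [a1 [[Pa1 Ca1] Na1]].
  destruct (infinite_avoid _ _ lx I2) as [a2 [[Pa2 Ca2] Na2]].
  assert (G1 : connK K' a1 (b ** a1)).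
  { rewrite <- (Hcomm a1 b); auto. apply NNPP. intros h. apply Na1. auto. }
  assert (G2 : connK K' a2 (b ** a2)).
  { rewrite <- (Hcomm a2 b); auto. apply NNPP. intros h. apply Na2. auto. }
  assert (K1 : ~ In a1 K') by (apply (conn_notin _ _ _ Ca1); auto).
  assert (K2 : ~ In a2 K') by (apply (conn_notin _ _ _ Ca2); auto).
  destruct (classic (forall z, connK K' a1 z -> ~ In z (map (mul b) K'))) as [D1|D1].
  - destruct (classic (forall z, connK K' a2 z -> ~ In z (map (mul b) K'))) as [D2|D2].
    + exfalso. apply Hn. apply conn_trans with a1; auto.
      apply conn_trans with a2; [|apply conn_sym; auto].
      eapply core; eauto.
    + right. apply not_all_ex_not in D2. destruct D2 as [z D2].
      apply imply_to_and in D2. destruct D2 as [Cz Iz]. apply NNPP in Iz.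
      apply in_map_iff in Iz. destruct Iz as [k [<- Hk]].
      apply conn_trans with a2; auto. apply conn_trans with (b ** k); auto.
      apply bK_conn; auto.
  - left. apply not_all_ex_not in D1. destruct D1 as [z D1].
    apply imply_to_and in D1. destruct D1 as [Cz Iz]. apply NNPP in Iz.
    apply in_map_iff in Iz. destruct Iz as [k [<- Hk]].
    apply conn_trans with a1; auto. apply conn_trans with (b ** k); auto.
    apply bK_conn; auto.
Qed.

Lemma far_exists (P : T -> Prop) K' : ~ finite_set P ->
  exists b, P b /\ forall k, In k K' -> ~ In k (map (mul b) K').
Proof.
  intros HP.
  destruct (infinite_avoid _ _ (flat_map (fun k => map (fun k' => k' ** inv k) K') K') HP)
    as [b [Pb Nb]].
  exists b. split; auto. intros k Hk Hin. apply in_map_iff in Hin. destruct Hin as [k0 [Hk0 Hin]].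
  apply Nb. apply in_flat_map. exists k0. split; auto. apply in_map_iff. exists k. split; auto.
  rewrite <- Hk0, <- assoc, invr, idr. auto.
Qed.

Lemma final (PA PB : T -> Prop) K' y1 y2 y3 :
  (forall a b, PA a -> PB b -> a ** b = b ** a) ->
  In one K' -> Kconnected K' ->
  ~ In y1 K' -> ~ In y2 K' -> ~ In y3 K' ->
  ~ connK K' y1 y2 -> ~ connK K' y1 y3 -> ~ connK K' y2 y3 ->
  ~ finite_set (fun a => PA a /\ connK K' y1 a) ->
  ~ finite_set (fun a => PA a /\ connK K' y2 a) ->
  (~ finite_set (fun a => PA a /\ connK K' y3 a) \/ ~ finite_set (fun b => PB b /\ connK K' y3 b)) ->
  ~ finite_set PB -> False.
Proof.
  intros Hcomm H1 Hc Hy1 Hy2 Hy3 N12 N13 N23 I1 I2 I3 HB.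
  assert (X : forall u v, connK K' u v -> forall w, connK K' w v -> connK K' u w).
  { intros u v Huv w Hwv. apply conn_trans with v; auto. apply conn_sym; auto. }
  destruct I3 as [I3|I3].
  - destruct (far_exists _ K' HB) as [b [Pb Fb]].
    destruct (side PA PB K' b y1 y2) as [A|A]; auto;
    destruct (side PA PB K' b y1 y3) as [B|B]; auto;
    destruct (side PA PB K' b y2 y3) as [C|C]; auto; eauto.
  - destruct (far_exists _ K' I3) as [b [[Pb Cb] Fb]].
    destruct (side PA PB K' b y1 y2) as [A|A]; auto; eauto.
Qed.

Lemma main : infinitely_many_ends E -> not_presentable_by_product mul one inv.
Proof.
  intros Hends. split.
  { destruct (Hends 1) as [K [l [Hlen [Hl _]]]]. destruct l as [|x l]; simpl in Hlen; try lia.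
    destruct (Hl x (or_introl eq_refl)) as [_ Hinf]. intros [L HL]. apply Hinf. exists L. auto. }
  intros G1 mul1 one1 inv1 G2 mul2 one2 inv2 phi Hg1 Hg2 Hphi Hfi.
  apply NNPP. intros Hn. apply not_or_and in Hn. destruct Hn as [NA NB].
  set (PA := image_set (fun a : G1 => phi (a, one2))) in *.
  set (PB := image_set (fun b : G2 => phi (one1, b))) in *.
  assert (Hone : phi (one1, one2) = one).
  { apply (cancel_l (phi (one1, one2))). rewrite idr, <- Hphi. unfold prod_mul; simpl.
    rewrite (grp_idl Hg1), (grp_idl Hg2). auto. }
  assert (Hcomm : forall a b, PA a -> PB b -> a ** b = b ** a).
  { intros a b [a1 <-] [b1 <-]. rewrite <- !Hphi. unfold prod_mul; simpl.
    rewrite (grp_idl Hg1), (grp_idr Hg1), (grp_idl Hg2), (grp_idr Hg2). auto. }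
  assert (Hdec : forall h, image_set phi h -> exists a b, PA a /\ PB b /\ h = a ** b).
  { intros h [[a1 b1] <-]. exists (phi (a1, one2)), (phi (one1, b1)). split; [exists a1; auto|].
    split; [exists b1; auto|]. rewrite <- Hphi. unfold prod_mul; simpl.
    rewrite (grp_idr Hg1), (grp_idl Hg2). auto. }
  assert (Hcov : exists L, forall x, exists h c, In c L /\ image_set phi h /\ x = h ** c).
  { destruct Hfi as [L HL]. exists (map inv L). intros x.
    destruct (HL (inv x)) as [c [h [Hc [Hh Hx]]]].
    exists (inv h), (inv c). split; [apply in_map; auto|]. split.
    - destruct Hh as [[p1 p2] <-]. exists (inv1 p1, inv2 p2). apply inv_unique.
      rewrite <- Hphi. unfold prod_mul; simpl. rewrite (grp_invr Hg1), (grp_invr Hg2). auto.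
    - rewrite <- inv_mul, <- Hx, inv_inv. auto. }
  destruct Hcov as [L Hcov].
  destruct (Hends 3) as [K [l [Hlen [Hl [Hnd Hsep]]]]].
  destruct l as [|x1 [|x2 [|x3 [|x4 l]]]]; simpl in Hlen; try lia.
  destruct (Hl x1) as [Hx1 I1]; [simpl; auto|].
  destruct (Hl x2) as [Hx2 I2]; [simpl; auto|].
  destruct (Hl x3) as [Hx3 I3]; [simpl; auto|].
  assert (D12 : x1 <> x2). { intros ->. inversion Hnd; subst. simpl in *. tauto. }
  assert (D13 : x1 <> x3). { intros ->. inversion Hnd; subst. simpl in *. tauto. }
  assert (D23 : x2 <> x3). { intros ->. inversion Hnd; subst. inversion H2; subst. simpl in *. tauto. }
  destruct (Kconn K) as [K' [HKK [H1 Hc]]].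
  destruct (refine K K' x1 HKK Hx1 I1) as [y1 [C1 [Ny1 J1]]].
  destruct (refine K K' x2 HKK Hx2 I2) as [y2 [C2 [Ny2 J2]]].
  destruct (refine K K' x3 HKK Hx3 I3) as [y3 [C3 [Ny3 J3]]].
  assert (Sep : forall xi xj yi yj, In xi [x1; x2; x3] -> In xj [x1; x2; x3] -> xi <> xj ->
     connK K xi yi -> connK K xj yj -> ~ connK K' yi yj).
  { intros xi xj yi yj Hi Hj Hij Ci Cj Hy. apply Hij. apply Hsep; auto.
    apply conn_trans with yi; auto. apply conn_trans with yj; [|apply conn_sym; auto].
    eapply conn_mono; [|exact Hy]. auto. }
  assert (N12 : ~ connK K' y1 y2) by (apply (Sep x1 x2); simpl; auto).
  assert (N13 : ~ connK K' y1 y3) by (apply (Sep x1 x3); simpl; auto).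
  assert (N23 : ~ connK K' y2 y3) by (apply (Sep x2 x3); simpl; auto).
  assert (N21 : ~ connK K' y2 y1) by (intros h; apply N12; apply conn_sym; auto).
  assert (N31 : ~ connK K' y3 y1) by (intros h; apply N13; apply conn_sym; auto).
  assert (N32 : ~ connK K' y3 y2) by (intros h; apply N23; apply conn_sym; auto).
  assert (HcommB : forall a b, PB a -> PA b -> a ** b = b ** a).
  { intros a b Ha Hb. symmetry. apply Hcomm; auto. }
  assert (NA' : ~ finite_set PA).
  { intros h. apply NA. exact h. }
  assert (NB' : ~ finite_set PB).
  { intros h. apply NB. exact h. }
  destruct (star PA PB (image_set phi) L K' y1 Hcomm Hdec Hcov Ny1 J1) as [A1|B1];
  destruct (star PA PB (image_set phi) L K' y2 Hcomm Hdec Hcov Ny2 J2) as [A2|B2];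
  destruct (star PA PB (image_set phi) L K' y3 Hcomm Hdec Hcov Ny3 J3) as [A3|B3].
  - apply (final PA PB K' y1 y2 y3); auto.
  - apply (final PA PB K' y1 y2 y3); auto.
  - apply (final PA PB K' y1 y3 y2); auto.
  - apply (final PB PA K' y2 y3 y1); auto.
  - apply (final PA PB K' y2 y3 y1); auto.
  - apply (final PB PA K' y1 y3 y2); auto.
  - apply (final PB PA K' y1 y2 y3); auto.
  - apply (final PB PA K' y1 y2 y3); auto.
Qed.
End G.

Theorem proposition9p1 (T : Type) (mul : T -> T -> T) (one : T) (inv : T -> T)
  (S : list T) :
  is_group mul one inv ->
  generating_list mul one inv S ->
  infinitely_many_ends (cayley_edge mul inv S) ->
  not_presentable_by_product mul one inv.
Proof.
  intros Hg HS Hends. exact (main T mul one inv Hg S HS Hends).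
Qed.
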